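(* For every composition $\alpha$, write $\mathcal{S}_\alpha=\sum_\beta c_\beta M_\beta$ in $\mathsf{QSym}$ and, for each $k$ at least the largest part of $\alpha$, $\mathcal{S}^{(k)}_\alpha=\sum_{\beta\ k\text{-bounded}} c^{(k)}_\beta M_\beta$ in $\mathsf{QSym}^{(k)}$. Then there exists $K$ such that for all $k\ge K$ and all compositions $\beta$ one has $c^{(k)}_\beta=c_\beta$ (in particular $c_\beta=0$ whenever $\beta$ is not $k$-bounded); that is, $\mathcal{S}^{(k)}_\alpha\to\mathcal{S}_\alpha$ as $k\to\infty$.
   Context: Compositions are finite sequences of positive integers (possibly empty $\emptyset$); $k$-bounded means all parts $\le k$; $\lambda(\alpha)$ is the sorted partition. $\mathsf{QSym}$ has basis $M_\alpha$ (monomial quasi-symmetric functions), $\mathsf{NSym}=\mathbb{Q}\langle H_1,H_2,\dots\rangle$ has basis $H_\alpha=H_{\alpha_1}\cdots H_{\alpha_m}$, paired by $\langle M_\alpha,H_\beta\rangle=\delta_{\alpha,\beta}$. $\mathsf{QSym}^{(k)}$ is the quotient of $\mathsf{QSym}$ by the ideal generated by the $M_\alpha$ with some part $>k$, $\mathsf{NSym}_{(k)}$ the subalgebra generated by $H_1,\dots,H_k$, with the induced pairing. Box-adding operators: $t_1(\alpha)=[1,\alpha_1,\dots,\alpha_m]$; for $i\ge2$, $t_i(\alpha)$ replaces the leftmost part equal to $i-1$ by $i$ (undefined if none). $\beta//\alpha$ is a horizontal composition strip of size $n$ if $\beta=t_{i_n}\cdots t_{i_1}(\alpha)$ with $1\le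 i_1<\cdots<i_n$. $\{\mathbf{S}_\alpha\}$ is the unique basis of $\mathsf{NSym}$ with $\mathbf{S}_\emptyset=1$ and $H_i\mathbf{S}_\alpha=\sum_\beta\mathbf{S}_\beta$ ($i\ge1$) over $\beta$ with $\beta//\alpha$ a horizontal composition strip of size $i$; $\{\mathcal{S}_\alpha\}$ (quasi-symmetric Schur functions) is the dual basis of $\mathsf{QSym}$. $k$-conjugation: hook length of cell $(i,j)$ of $\kappa$ is $\kappa_i-j+\kappa'_j-i+1$; a $(k+1)$-core has no cell of hook length $k+1$; $p(\kappa)$ has $i$-th part the number of cells in row $i$ with hook length $\le k$; $p$ is a bijection from $(k+1)$-cores to $k$-bounded partitions with inverse $c$; $\lambda^{\omega_k}=p(c(\lambda)')$. For $k$-bounded $\mu\subseteq\lambda$, $\lambda/\mu$ is a horizontal $k$-strip if no two of its cells share a column, and $\mu^{\omega_k}\subseteq\lambda^{\omega_k}$ with no two cells of $\lambda^{\omega_k}/\mu^{\omega_k}$ in the same row. For $k$-bounded $\alpha,\beta$, $\beta//\alpha$ is a horizontal $k$-composition strip of size $n$ if it is a horizontal composition strip of size $n$ and $\lambda(\beta)/\lambda(\alpha)$ is a horizontal $k$-strip. $\{\mathbf{S}^{(k)}_\alpha\}$ is the unique basis of $\mathsf{NSym}_{(k)}$ with $\mathbf{S}^{(k)}_\emptyset=1$ and $H_i\mathbf{S}^{(k)}_\alpha=\sum_\beta\mathbf{S}^{(k)}_\beta$ ($1\le i\le k$) over $\beta$ with $\beta//\alpha$ a horizontal $k$-composition strip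 of size $i$; $\{\mathcal{S}^{(k)}_\alpha\}$ (quasi-symmetric affine Schur functions) is the dual basis of $\mathsf{QSym}^{(k)}$. *)

(* Defs.v *)
From mathcomp Require Import all_boot all_order all_algebra.
From Stdlib Require ClassicalDescription.
Set Implicit Arguments. Unset Strict Implicit. Unset Printing Implicit Defensive.
Import GRing.Theory.

Definition is_comp (a : seq nat) : bool := all (fun x => 0 < x)%N a.
Definition kbounded (k : nat) (a : seq nat) : bool := all (fun x => x <= k)%N a.
Definition maxpart (a : seq nat) : nat := foldr maxn 0%N a.

Fixpoint repl_first (x y : nat) (a : seq nat) : seq nat :=
  match a with
  | [::] => [::]
  | z :: a' => if z == x then y :: a' else z :: repl_first x y a'
  end.

Definition tadd (i : nat) (a : seq nat) : option (seq nat) :=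
  if i == 1%N then Some (1%N :: a)
  else if (2 <= i)%N && (i.-1 \in a) then Some (repl_first i.-1 i a) else None.

(* t_{i_n} ... t_{i_1} (a) for s = [:: i_1; ...; i_n] *)
Definition tapply (s : seq nat) (a : seq nat) : option (seq nat) :=
  foldl (fun o i => obind (tadd i) o) (Some a) s.

Fixpoint incseqs (lo m n : nat) {struct m} : seq (seq nat) :=
  match n, m with
  | 0, _ => [:: [::]]
  | n'.+1, 0 => [::]
  | n'.+1, m'.+1 => [seq lo :: s | s <- incseqs lo.+1 m' n'] ++ incseqs lo.+1 m' n
  end.

(* the (duplicate-free) list of all beta such that beta//a is a horizontal
   composition strip of size n.  Indices i_1 < ... < i_n with i_j >= 1; since
   each t_i creates a part equal to i, parts never decrease and each step
   raises the largest part by at most one, i_n <= maxpart beta <= maxpart a + n,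
   so the bound below loses nothing. *)
Definition hstrips (a : seq nat) (n : nat) : seq (seq nat) :=
  undup (pmap (fun s => tapply s a) (incseqs 1 (maxpart a + n) n)).

(* an element of NSym is given by its coefficients on the basis H_beta *)
Definition nsym := seq nat -> rat.
Definition Hb (b : seq nat) : nsym := fun g => ((g == b)%:R)%R.
(* left multiplication by H_i : H_i H_beta = H_(i :: beta) *)
Definition Hmul (i : nat) (f : nsym) : nsym := fun g =>
  match g with [::] => 0%R | j :: g' => if j == i then f g' else 0%R end.
Definition in_span (P : pred (seq nat)) (f : nsym) : Prop :=
  exists l : seq (seq nat), forall g, f g != 0%R -> (g \in l) && P g.

Definition expands (P : pred (seq nat)) (S : seq nat -> nsym)
    (d : seq nat -> rat) (f : nsym) : Prop :=
  exists l : seq (seq nat),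
    [/\ uniq l, all P l, (forall a, d a != 0%R -> a \in l) &
        forall g, f g = (\sum_(a <- l) d a * S a g)%R].

Definition is_basis (P : pred (seq nat)) (S : seq nat -> nsym) : Prop :=
  [/\ forall a, P a -> in_span P (S a),
      forall f, in_span P f -> exists d, expands P S d f &
      forall f d1 d2, expands P S d1 f -> expands P S d2 f -> forall a, d1 a = d2 a].

(* the basis {bS_alpha} of NSym dual to quasisymmetric Schur functions *)
Definition NSchur_basis (S : seq nat -> nsym) : Prop :=
  [/\ is_basis is_comp S,
      (forall g, S [::] g = Hb [::] g) &
      forall a i, is_comp a -> (0 < i)%N -> forall g,
        Hmul i (S a) g = (\sum_(b <- hstrips a i) S b g)%R].

Definition lam (a : seq nat) : seq nat := sort geq a.
Definition is_part (l : seq nat) : bool := sorted geq l && all (fun x => 0 < x)%N l.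
Definition conj_part (l : seq nat) : seq nat :=
  [seq count (fun x => ltn j x) l | j <- iota 0 (maxpart l)].
(* hook length of cell (i,j), 1-indexed *)
Definition hook (l : seq nat) (i j : nat) : nat :=
  (nth 0 l i.-1 - j) + (nth 0 (conj_part l) j.-1 - i) + 1.
Definition is_core (k : nat) (l : seq nat) : bool :=
  is_part l &&
  all (fun i => all (fun j => hook l i j != k.+1) (iota 1 (nth 0 l i.-1)))
      (iota 1 (size l)).
(* the map p from (k+1)-cores to k-bounded partitions (zero rows dropped) *)
Definition core_to_kbdd (k : nat) (l : seq nat) : seq nat :=
  filter (fun x => 0 < x)%N
    [seq count (fun j => hook l i j <= k)%N (iota 1 (nth 0 l i.-1))
    | i <- iota 1 (size l)].
(* mu = lam^{omega_k} = p(c(lam)'), with c = p^{-1} on (k+1)-cores *)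
Definition is_kconj (k : nat) (la mu : seq nat) : Prop :=
  exists kap, [/\ is_core k kap, core_to_kbdd k kap = la &
                  core_to_kbdd k (conj_part kap) = mu].
Definition part_sub (mu la : seq nat) : bool :=
  (size mu <= size la)%N && all (fun i => nth 0 mu i <= nth 0 la i)%N (iota 0 (size mu)).
Definition horiz_strip (mu la : seq nat) : bool :=
  part_sub mu la &&
  all (fun j => nth 0 (conj_part la) j <= (nth 0 (conj_part mu) j).+1)%N
      (iota 0 (maxpart la)).
Definition hkstrip (k : nat) (mu la : seq nat) : Prop :=
  [/\ is_part mu && kbounded k mu, is_part la && kbounded k la,
      horiz_strip mu la &
      exists muw law, [/\ is_kconj k mu muw, is_kconj k la law,
        part_sub muw law &
        all (fun i => nth 0 law i <= (nth 0 muw i).+1)%N (iota 0 (size law))]].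

Definition pbool (P : Prop) : bool :=
  if ClassicalDescription.excluded_middle_informative P then true else false.

Definition kcomp (k : nat) : pred (seq nat) := fun a => is_comp a && kbounded k a.

Definition kNSchur_basis (k : nat) (S : seq nat -> nsym) : Prop :=
  [/\ is_basis (kcomp k) S,
      (forall g, S [::] g = Hb [::] g) &
      forall a i, kcomp k a -> (0 < i <= k)%N -> forall g,
        Hmul i (S a) g =
        (\sum_(b <- hstrips a i | kbounded k b && pbool (hkstrip k (lam a) (lam b)))
           S b g)%R].

(* Main.v *)
Require Import Defs.
From mathcomp Require Import all_boot all_order all_algebra.
From mathcomp Require Import zify.
Set Implicit Arguments. Unset Strict Implicit.

Lemma repl_perm x y a : x \in a -> perm_eq (x :: repl_first x y a) (y :: a).
Proof.
elim: a => [|z a IH] //=; rewrite in_cons.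
case: (z =P x) => [->|ne] H.
  by apply/permP => p /=; rewrite addnCA.
case/orP: H => [/eqP e|xa]; first by case: ne.
have /permP C := IH xa.
apply/permP => p /=; have := C p => /=; lia.
Qed.

Lemma cnt_step t x : (t < x.+1) = ((t < x) + (x == t) > 0).
Proof. by rewrite ltnS leq_eqVlt eq_sym; case: (x == t); case: (t < x). Qed.

Lemma tadd_spec j a a' : tadd j a = Some a' ->
  [/\ 0 < j, (is_comp a -> is_comp a'), sumn a' = (sumn a).+1 &
      forall t, count (fun x => t < x) a' = count (fun x => t < x) a + (j.-1 == t)].
Proof.
rewrite /tadd; case: eqP => [-> [<-]|ne].
  by split=> // t; rewrite /= addnC; case: t.
case: andP => // -[j2 ja] [<-].
have jp : j = (j.-1).+1 by case: j j2 {ne ja}.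
have P := @repl_perm _ j _ ja.
split.
- exact: ltnW.
- rewrite /is_comp => ca; have := perm_all (fun x => 0 < x) P.
  by rewrite /= ca andbT (ltnW j2) => /andP [].
- by have := perm_sumn P => /=; lia.
- move=> t; have /permP C := P.
  have F := C (fun x => t < x); simpl in F.
  case: (ltngtP t j.-1) => h.
  + have h2 : t < j by lia.
    by rewrite h h2 /= in F; case: (j.-1 =P t) => e /=; lia.
  + have h2 : (t < j) = false by apply/negbTE; rewrite -leqNgt; lia.
    rewrite h2 ltnNge (ltnW h) /= in F; case: (j.-1 =P t) => e /=; lia.
  + subst t; have h2 : j.-1 < j by lia.
    rewrite h2 ltnn /= in F; case: (j.-1 =P j.-1) => // e /=; lia.
Qed.

Lemma tapply_spec s a b : tapply s a = Some b ->
  [/\ all (fun x => 0 < x) s, (is_comp a -> is_comp b), sumn b = sumn a + size s &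
      forall t, count (fun x => t < x) b = count (fun x => t < x) a + count (fun j => j.-1 == t) s].
Proof.
rewrite /tapply.
elim: s a => [|i s IH] a /=.
  by case=> <-; split=> // [|t]; rewrite addn0.
case E: (tadd i a) => [a'|]; last first.
  move=> H; exfalso; move: H; clear; elim: s => // x s' IHs /=.
move=> /IH [H1 H2 H3 H4]; case: (tadd_spec E) => i0 G2 G3 G4.
split.
- by rewrite i0.
- by move=> /G2 /H2.
- by rewrite H3 G3; lia.
- by move=> t; rewrite H4 G4; lia.
Qed.

Lemma incseqs_spec lo m n s : s \in incseqs lo m n ->
  [/\ size s = n, uniq s & all (fun x => lo <= x) s].
Proof.
elim: m lo n s => [|m IH] lo [|n] s //=; rewrite ?inE.
- by move/eqP->.
- by move/eqP->.
rewrite mem_cat => /orP [/mapP [s' /IH [H1 H2 H3] ->]|/IH [H1 H2 H3]].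
  split=> //=; first by rewrite H1.
    rewrite H2 andbT; apply/negP => /(allP H3); by rewrite ltnn.
  rewrite leqnn /=; apply/allP => x /(allP H3); exact: ltnW.
split=> //; apply/allP => x /(allP H3); exact: ltnW.
Qed.

Lemma cnt_pred_le1 s t : uniq s -> all (fun x => 0 < x) s -> count (fun j => j.-1 == t) s <= 1.
Proof.
move=> u p.
have -> : count (fun j => j.-1 == t) s = count_mem t.+1 s.
  apply: eq_in_count => j /(allP p); case: j => // j _ /=.
by rewrite count_uniq_mem //; case: (_ \in _).
Qed.

Lemma hstrips_spec a i b : b \in hstrips a i ->
  [/\ (is_comp a -> is_comp b), sumn b = sumn a + i &
      forall t, count (fun x => t < x) a <= count (fun x => t < x) b <= (count (fun x => t < x) a).+1].
Proof.
rewrite /hstrips mem_undup mem_pmap => /mapP [s /incseqs_spec [H1 H2 H3] /esym /tapply_spec [K1 K2 K3 K4]].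
split=> //; first by rewrite K3 H1.
move=> t; rewrite K4 leq_addr /=.
have := cnt_pred_le1 t H2 K1; lia.
Qed.

Lemma has_gt l j : has (fun x => j < x) l = (j < maxpart l).
Proof. by elim: l => //= x l ->; rewrite leq_max. Qed.

Lemma cnt0 l j : maxpart l <= j -> count (fun x => j < x) l = 0.
Proof. by move=> h; apply/eqP; rewrite -leqn0 leqNgt -has_count has_gt -leqNgt. Qed.

Lemma size_conj l : size (conj_part l) = maxpart l.
Proof. by rewrite size_map size_iota. Qed.

Lemma nth_conj l j : nth 0 (conj_part l) j = count (fun x => j < x) l.
Proof.
case: (ltnP j (maxpart l)) => h.
  by rewrite (nth_map 0) ?size_iota // nth_iota.
by rewrite nth_default ?size_conj // cnt0.
Qed.

Lemma nth_le_max l i : nth 0 l i <= maxpart l.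
Proof.
elim: l i => [|x l IH] [|i] //=; rewrite ?nth_nil // leq_max ?leqnn //.
by rewrite IH orbT.
Qed.

Lemma sz_sum l : all (fun x => 0 < x) l -> size l <= sumn l.
Proof. elim: l => //= x l IH /andP [x0 /IH h]; lia. Qed.

Lemma szmax l : all (fun x => 0 < x) l -> size l + maxpart l <= (sumn l).+1.
Proof.
elim: l => //= x l IH /andP [x0 h].
have := IH h; have := sz_sum h; lia.
Qed.

Lemma hook_le X i j : hook X i j <= (nth 0 X i.-1 - j) + (size X - i) + 1.
Proof.
rewrite /hook nth_conj.
have := count_size (fun x => j.-1 < x) X; lia.
Qed.

Lemma map_nth_shift (X : seq nat) : [seq nth 0 X i.-1 | i <- iota 1 (size X)] = X.
Proof.
rewrite (iotaDl 1 0) -map_comp (@eq_map _ _ _ (nth 0 X)); last by [].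
by rewrite map_nth_iota0 // take_size.
Qed.

Definition hooks_ok k X := forall i j, 0 < i <= size X -> 0 < j <= nth 0 X i.-1 -> hook X i j <= k.

Lemma core_kbdd k X : hooks_ok k X -> all (fun x => 0 < x) X -> core_to_kbdd k X = X.
Proof.
move=> H P; rewrite /core_to_kbdd.
have -> : [seq count (fun j => hook X i j <= k) (iota 1 (nth 0 X i.-1)) | i <- iota 1 (size X)] = X.
  rewrite -[RHS]map_nth_shift.
  apply/eq_in_map => i; rewrite mem_iota => /andP [i1 i2].
  rewrite -[in RHS](size_iota 1 (nth 0 X i.-1)); apply/eqP; rewrite -all_count.
  apply/allP => j; rewrite mem_iota => /andP [j1 j2]; apply: H; lia.
exact/all_filterP.
Qed.

Lemma hooks_l k l : all (fun x => 0 < x) l -> sumn l <= k -> hooks_ok k l.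
Proof.
move=> P s i j hi hj; have := hook_le l i j; have := nth_le_max l i.-1; have := szmax P; lia.
Qed.

Lemma hooks_conj k l : all (fun x => 0 < x) l -> sumn l <= k -> hooks_ok k (conj_part l).
Proof.
move=> P s i j; rewrite size_conj => hi hj; have := hook_le (conj_part l) i j.
rewrite size_conj nth_conj in hj *.
have := count_size (fun x => i.-1 < x) l; have := szmax P; lia.
Qed.

Lemma conj_pos l : all (fun x => 0 < x) (conj_part l).
Proof.
apply/allP => x /mapP [j]; rewrite mem_iota => /andP [_ h] ->.
by rewrite -has_count has_gt.
Qed.

Lemma core_of k l : is_part l -> hooks_ok k l -> is_core k l.
Proof.
move=> P H; rewrite /is_core P /=.
apply/allP => i; rewrite mem_iota => /andP [i1 i2].
apply/allP => j; rewrite mem_iota => /andP [j1 j2].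
have := H i j; rewrite neq_ltn => h; apply/orP; left; rewrite ltnS; apply: h; lia.
Qed.

Lemma SC l t i : sorted geq l -> (t < nth 0 l i) = (i < count (fun x => t < x) l).
Proof.
elim: l i => [|x l IH] i /=; first by rewrite nth_nil; case: i.
move=> srt.
have sl : sorted geq l by case: l srt {IH} => //= y l /andP [].
have al : all (fun y => y <= x) l.
  have tr : transitive geq by move=> a b c h1 h2; exact: leq_trans h2 h1.
  by move: srt; rewrite /= (path_sortedE tr) => /andP [].
case tx: (t < x).
  by case: i => [|i] //=; rewrite IH // add1n ltnS.
have c0 : count (fun y => t < y) l = 0.
  apply/eqP; rewrite -leqn0 leqNgt -has_count; apply/hasPn => y /(allP al) yx.
  by rewrite -leqNgt (leq_trans yx) // leqNgt tx.
by case: i => [|i] /=; [rewrite tx c0 | rewrite IH // c0].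
Qed.

Lemma lam_perm a : perm_eq (lam a) a.
Proof. by rewrite /lam perm_sort. Qed.

Lemma lam_sorted a : sorted geq (lam a).
Proof. apply: sort_sorted => x y; exact: leq_total. Qed.

Lemma cnt_lam a (p : pred nat) : count p (lam a) = count p a.
Proof. by have /permP := lam_perm a; apply. Qed.

Lemma mem_le_sum x a : x \in a -> x <= sumn a.
Proof. elim: a => //= y a IH; rewrite in_cons => /orP [/eqP ->|/IH]; lia. Qed.

Lemma mp_le m L : (forall t, count (fun x => t < x) m <= count (fun x => t < x) L) -> maxpart m <= maxpart L.
Proof.
move=> H; case E: (maxpart m) => [//|n].
have := has_gt m n; rewrite E ltnSn has_count => h.
by rewrite -has_gt has_count; apply: leq_trans (H n); rewrite h.
Qed.

Lemma part_lam a k : is_comp a -> sumn a <= k -> (is_part (lam a) && kbounded k (lam a)) && all (fun x => 0 < x) (lam a).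
Proof.
move=> ca s; rewrite /is_part lam_sorted /kbounded !(perm_all _ (lam_perm a)) /=.
move: ca; rewrite /is_comp => -> /=; rewrite andbT.
apply/allP => x /mem_le_sum h; lia.
Qed.

Lemma kconj_lam k a : is_comp a -> sumn a <= k -> is_kconj k (lam a) (conj_part (lam a)).
Proof.
move=> ca s; have /andP [/andP [P1 P2] P3] := part_lam ca s.
have s' : sumn (lam a) <= k by rewrite (perm_sumn (lam_perm a)).
exists (lam a); split.
- exact: core_of P1 (hooks_l P3 s').
- exact: core_kbdd (hooks_l P3 s') P3.
- exact: core_kbdd (hooks_conj P3 s') (conj_pos _).
Qed.

Lemma hk_main k a b : is_comp a -> is_comp b -> sumn a <= k -> sumn b <= k ->
  (forall t, count (fun x => t < x) a <= count (fun x => t < x) b <= (count (fun x => t < x) a).+1) ->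
  hkstrip k (lam a) (lam b).
Proof.
move=> ca cb sa sb H.
have Hl t : count (fun x => t < x) (lam a) <= count (fun x => t < x) (lam b) by rewrite !cnt_lam; case/andP: (H t).
have Hu t : count (fun x => t < x) (lam b) <= (count (fun x => t < x) (lam a)).+1 by rewrite !cnt_lam; case/andP: (H t).
have /andP [Pa _] := part_lam ca sa.
have /andP [Pb _] := part_lam cb sb.
split=> //.
- rewrite /horiz_strip /part_sub; apply/andP; split; last first.
    by apply/allP => j _; rewrite !nth_conj.
  apply/andP; split.
    rewrite !size_sort; move: ca cb; rewrite /is_comp !all_count => /eqP <- /eqP <-.
    by case/andP: (H 0).
  apply/allP => i _; rewrite leqNgt; apply/negP => h.
  have := SC (nth 0 (lam b) i) i (lam_sorted b); rewrite ltnn => /esym /negbT.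
  rewrite -leqNgt => h2.
  have := SC (nth 0 (lam b) i) i (lam_sorted a); rewrite h => /esym h3.
  have := leq_trans h3 (Hl _); lia.
- exists (conj_part (lam a)), (conj_part (lam b)); split.
  + exact: kconj_lam.
  + exact: kconj_lam.
  + rewrite /part_sub !size_conj mp_le //=.
    by apply/allP => j _; rewrite !nth_conj.
  + by apply/allP => j _; rewrite !nth_conj.
Qed.

Lemma pboolT (P : Prop) : P -> pbool P.
Proof. by rewrite /pbool; case: ClassicalDescription.excluded_middle_informative. Qed.

Lemma strip_ok k a i b : is_comp a -> sumn a + i <= k -> b \in hstrips a i ->
  kbounded k b && pbool (hkstrip k (lam a) (lam b)).
Proof.
move=> ca s /hstrips_spec [H1 H2 H3].
have cb := H1 ca.
apply/andP; split.
  by apply/allP => x /mem_le_sum; lia.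
apply: pboolT; apply: hk_main => //; lia.
Qed.

Lemma hstrips_sum a i : all (fun b => sumn b == sumn a + i) (hstrips a i).
Proof. by apply/allP => b /hstrips_spec [_ -> _]. Qed.

Lemma hstrips_comp a i : is_comp a -> all is_comp (hstrips a i).
Proof. by move=> ca; apply/allP => b /hstrips_spec [H _ _]; apply: H. Qed.

Lemma hstrips_uniq a i : uniq (hstrips a i).
Proof. exact: undup_uniq. Qed.

Local Open Scope ring_scope.
Import GRing.Theory.

Fixpoint coef (R : nat -> seq nat -> seq (seq nat)) (beta : seq nat)
  : (seq nat -> rat) * seq (seq nat) :=
  match beta with
  | [::] => (fun a => ((a == [::])%:R : rat), [:: [::]])
  | i :: beta' => let cl := coef R beta' in
     (fun b => \sum_(a <- cl.2) cl.1 a * ((b \in R i a)%:R),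
      undup (flatten [seq R i a | a <- cl.2]))
  end.

Lemma sum_filter (l r : seq (seq nat)) (F : seq nat -> rat) :
  uniq r -> uniq l -> {subset r <= l} ->
  \sum_(b <- l) (b \in r)%:R * F b = \sum_(b <- r) F b.
Proof.
move=> ur ul sub.
under eq_bigr => b _ do rewrite mulr_natl mulrb.
rewrite -big_mkcond -big_filter; apply: perm_big.
apply: uniq_perm => //; first exact: filter_uniq.
move=> b; rewrite mem_filter /=; case bin: (b \in r) => //=; exact: sub.
Qed.

Lemma Hb_cons i beta g : Hb (i :: beta) g = Hmul i (Hb beta) g.
Proof.
rewrite /Hb; case: g => [|j g] //=; rewrite eqseq_cons.
by case: (j == i).
Qed.

Lemma coef_spec (P : pred (seq nat)) (Q : pred nat) (S : seq nat -> nsym) R :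
  P [::] -> (forall g, S [::] g = Hb [::] g) ->
  (forall i a, Q i -> P a -> uniq (R i a) && all P (R i a)) ->
  (forall i a, Q i -> P a -> forall g, Hmul i (S a) g = \sum_(b <- R i a) S b g) ->
  forall beta, all Q beta ->
  [/\ uniq (coef R beta).2, all P (coef R beta).2,
      (forall a, (coef R beta).1 a != 0 -> a \in (coef R beta).2) &
      forall g, Hb beta g = \sum_(a <- (coef R beta).2) (coef R beta).1 a * S a g].
Proof.
move=> P0 S0 HR HP; elim=> [|i beta IH] /=.
  split=> //=; first by rewrite P0.
    by move=> a; rewrite inE; case: (a == [::]) => //=; rewrite eqxx.
  by move=> g; rewrite big_seq1 eqxx mul1r S0.
move=> /andP [Qi Qb]; case: (IH Qb) => U A Sup F.
set c := (coef R beta).1; set l := (coef R beta).2.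
split.
- exact: undup_uniq.
- apply/allP => b; rewrite mem_undup => /flattenP [r /mapP [a al ->]].
  by have /andP [_ /allP] := HR i a Qi (allP A a al); apply.
- move=> b; apply: contraR => bn; rewrite big1_seq // => a /andP [_ al].
  have -> : (b \in R i a) = false.
    apply/negbTE; apply: contra bn => bin; rewrite mem_undup; apply/flattenP.
    by exists (R i a) => //; exact: map_f.
  by rewrite mulr0.
- move=> g.
  have E : forall g, \sum_(b <- undup (flatten [seq R i a | a <- l]))
             (\sum_(a <- l) c a * (b \in R i a)%:R) * S b g =
           \sum_(a <- l) c a * Hmul i (S a) g.
    move=> {}g; under eq_bigr => b _ do rewrite big_distrl.
    rewrite exchange_big /=; apply: eq_big_seq => a al.
    under eq_bigr => b _ do rewrite -mulrA.
    rewrite -big_distrr /= sum_filter.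
    + by rewrite HP // (allP A).
    + by have /andP [] := HR i a Qi (allP A a al).
    + exact: undup_uniq.
    + move=> b bin; rewrite mem_undup; apply/flattenP.
      by exists (R i a) => //; exact: map_f.
  rewrite E Hb_cons; case: g => [|j g] /=.
    by rewrite big1 // => a _; rewrite mulr0.
  case: (j == i); first exact: F.
  by rewrite big1 // => a _; rewrite mulr0.
Qed.

Lemma coef_sum R : (forall i a, all (fun b => sumn b == sumn a + i)%N (R i a)) ->
  forall beta, all (fun a => sumn a == sumn beta)%N (coef R beta).2.
Proof.
move=> HR; elim=> [|i beta IH] //=.
apply/allP => b; rewrite mem_undup => /flattenP [r /mapP [a al ->]] /(allP (HR i a)) /eqP ->.
have /eqP -> := allP IH a al; apply/eqP; lia.
Qed.

Lemma coef_agree R1 R2 n : (forall i a, all (fun b => sumn b == sumn a + i)%N (R1 i a)) ->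
  (forall i a, (sumn a + i <= n)%N -> R1 i a = R2 i a) ->
  forall beta, (sumn beta <= n)%N ->
  (coef R1 beta).2 = (coef R2 beta).2 /\ forall b, (coef R1 beta).1 b = (coef R2 beta).1 b.
Proof.
move=> HS HE; elim=> [|i beta IH] //= sb.
have [E2 E1] := IH (leq_trans (leq_addl i _) sb).
have HA : forall a, a \in (coef R1 beta).2 -> R1 i a = R2 i a.
  by move=> a al; apply: HE; have /eqP := allP (coef_sum HS beta) a al; lia.
split.
  by rewrite -E2; congr undup; congr flatten; apply/eq_in_map => a al; rewrite HA.
by move=> b; rewrite -E2; apply: eq_big_seq => a al; rewrite E1 HA.
Qed.

Lemma coef_zero R beta alpha : (forall i a, all (fun b => sumn b == sumn a + i)%N (R i a)) ->
  (forall a, (coef R beta).1 a != 0 -> a \in (coef R beta).2) ->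
  (sumn alpha != sumn beta)%N -> (coef R beta).1 alpha = 0.
Proof.
move=> HS Sup ne; apply/eqP; apply: contraR ne => /Sup al.
exact: (allP (coef_sum HS beta)).
Qed.

Definition RS (i : nat) (a : seq nat) := hstrips a i.
Definition Rk k i a := if (sumn a + i <= k)%N then hstrips a i
  else [seq b <- hstrips a i | kbounded k b && pbool (hkstrip k (lam a) (lam b))].

Lemma RS_sum i a : all (fun b => sumn b == sumn a + i)%N (RS i a).
Proof. exact: hstrips_sum. Qed.

Lemma Rk_sum k i a : all (fun b => sumn b == sumn a + i)%N (Rk k i a).
Proof.
rewrite /Rk; case: ifP => _; first exact: hstrips_sum.
apply/allP => b; rewrite mem_filter => /andP [_ bin]; exact: (allP (hstrips_sum a i)).
Qed.

Unset Implicit Arguments.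
Theorem mainTheorem6 (S : seq nat -> nsym) (Sk : nat -> seq nat -> nsym) :
  NSchur_basis S ->
  (forall k, (0 < k)%N -> kNSchur_basis k (Sk k)) ->
  forall alpha, is_comp alpha ->
  exists K : nat, forall k, (K <= k)%N -> (maxpart alpha <= k)%N ->
  forall beta, is_comp beta ->
  forall d dk : seq nat -> rat,
    expands is_comp S d (Hb beta) ->
    (kbounded k beta -> expands (kcomp k) (Sk k) dk (Hb beta)) ->
    (if kbounded k beta then dk alpha else 0) = d alpha.
Proof.
move=> [[_ _ U] S0 SP] HK alpha ca.
exists (sumn alpha).+1 => k Kk _ beta cb d dk Hd Hdk.
have k0 : (0 < k)%N by lia.
have [U1 A1 Sup1 F1] := @coef_spec is_comp (fun i => 0 < i)%N S RS erefl S0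
  (fun i a _ ca => introT andP (conj (hstrips_uniq a i) (hstrips_comp i ca)))
  (fun i a i0 ca g => SP a i ca i0 g) beta cb.
have Ed : d alpha = (coef RS beta).1 alpha.
  have ES : expands is_comp S (coef RS beta).1 (Hb beta) by exists (coef RS beta).2.
  exact: (U _ _ _ Hd ES alpha).
rewrite Ed.
case kb: (kbounded k beta); last first.
  rewrite coef_zero //; first exact: RS_sum.
  move: kb => /negbT /allPn [x /mem_le_sum xs kx]; rewrite -ltnNge in kx.
  apply/eqP; lia.
have [[_ _ Uk] Sk0 SkP] := HK k k0.
have HR : forall i a, (0 < i <= k)%N -> kcomp k a ->
    uniq (Rk k i a) && all (kcomp k) (Rk k i a).
  move=> i a /andP [i0 ik] /andP [ca' ka]; rewrite /Rk; case: ifP => h.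
    rewrite hstrips_uniq /=; apply/allP => b bin; apply/andP; split.
      exact: (allP (hstrips_comp i ca')).
    by case/andP: (strip_ok ca' h bin).
  rewrite filter_uniq ?hstrips_uniq //=; apply/allP => b.
  rewrite mem_filter => /andP [/andP [kb' _] bin]; rewrite /kcomp kb' andbT.
  exact: (allP (hstrips_comp i ca')).
have HP : forall i a, (0 < i <= k)%N -> kcomp k a -> forall g,
    Hmul i (Sk k a) g = \sum_(b <- Rk k i a) Sk k b g.
  move=> i a Qi ka g; rewrite SkP // /Rk; case: ifP => h; last by rewrite big_filter.
  rewrite -big_filter; congr (\sum_(b <- _) _); apply/all_filterP; apply/allP => b.
  by case/andP: ka => ca' _; apply: strip_ok.
have Qb : all (fun i => 0 < i <= k)%N beta.
  by apply/allP => x xb; rewrite (allP cb x xb) (allP kb x xb).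
have [U2 A2 Sup2 F2] := @coef_spec (kcomp k) (fun i => 0 < i <= k)%N (Sk k) (Rk k) erefl Sk0 HR HP beta Qb.
have Ek : dk alpha = (coef (Rk k) beta).1 alpha.
  have ES : expands (kcomp k) (Sk k) (coef (Rk k) beta).1 (Hb beta) by exists (coef (Rk k) beta).2.
  exact: (Uk _ _ _ (Hdk kb) ES alpha).
rewrite Ek.
case: (leqP (sumn beta) k) => sb.
  have HE : forall i a, (sumn a + i <= k)%N -> RS i a = Rk k i a by move=> i a h; rewrite /Rk h.
  by have [_ E1] := @coef_agree RS (Rk k) k RS_sum HE beta sb; rewrite E1.
rewrite !coef_zero //; try (by move=> *; apply: Rk_sum); try (by move=> *; apply: RS_sum); apply/eqP; lia.
Qed.
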